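(* For any simplicial model $\mathcal{C}$, $\mathcal{C}$ is isomorphic to $\mathtt{SC}(\mathtt{LEM}(\mathcal{C}))$; and for any local epistemic model $\mathcal{M}$, $\mathcal{M}^{pr}$ is isomorphic to $\mathtt{LEM}(\mathtt{SC}(\mathcal{M}))$ (so for any proper local epistemic model $\mathcal{M}$, $\mathcal{M}$ is isomorphic to $\mathtt{LEM}(\mathtt{SC}(\mathcal{M}))$).
   Context: Fix a nonempty finite set $\mathbf{A}$ of agents and a countable set $\mathbf{P}$ of predicate letters. A simplicial model is $\mathcal{C}=(\mathcal{V},C,\chi,\ell)$: $\mathcal{V}\neq\emptyset$; $C\subseteq\wp(\mathcal{V})$ with $\emptyset\notin C$, closed under nonempty subsets, containing all singletons; $\chi:\mathcal{V}\to\mathbf{A}$ injective on every member of $C$; $\ell:\mathbf{P}\to\wp(\mathcal{V})$; facets $\mathcal{F}(C)$ are the inclusion-maximal members of $C$. A first-order Kripke model is $\mathcal{M}=(W,\delta,\{R_a\}_{a\in\mathbf{A}},\rho)$: $W\neq\emptyset$, $\delta:W\to\wp(\mathbf{A})\setminus\{\emptyset\}$, $R_a\subseteq W\times W$ with $R_a(w)=\emptyset$ if $a\notin\delta(w)$, $\rho:\mathbf{P}\times W\to\wp(\mathbf{A})$ with $\rho(p,w)\subseteq\delta(w)$. $\mathcal{M}$ is a local epistemic model if: for each $a$ the restriction of $R_a$ to $\{w\mid a\in\delta(w)\}$ is an equivalence relation; $wR_av$ and $a\in\delta(w)$ imply $a\in\delta(v)$; $wR_av$ and $a\in\rho(p,w)$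 imply $a\in\rho(p,v)$; $v\in\bigcap_{a\in\delta(w)}R_a(w)$ implies $\delta(v)\subseteq\delta(w)$. It is proper if additionally $\bigcap_{a\in\delta(w)}R_a(w)=\{w\}$ for all $w$. Properization: with $[w]_\delta=\bigcap_{a\in\delta(w)}R_a(w)$, $\mathcal{M}^{pr}$ has worlds $\{[w]_\delta\mid w\in W\}$, $\delta^{pr}([w]_\delta)=\delta(w)$, $R^{pr}_a=\{([w]_\delta,[v]_\delta)\mid wR_av\}$, $\rho^{pr}(p,[w]_\delta)=\rho(p,w)$. $\mathtt{LEM}(\mathcal{C})$ has worlds $\mathcal{F}(C)$, $\delta(F)=\chi[F]$, $R_a=\{(F,G)\mid a\in\chi[F\cap G]\}$, $\rho(p,F)=\chi[F\cap\ell(p)]$. For a local epistemic model $\mathcal{M}$, let $[w]_a=R_a(w)$ and $F^{\mathcal M}_w=\{(a,[w]_a)\mid a\in\delta(w)\}$; $\mathtt{SC}(\mathcal{M})$ has vertices $\{(a,[w]_a)\mid w\in W,a\in\delta(w)\}$, faces the nonempty subsets of the sets $F^{\mathcal M}_w$ ($w\in W$), coloring $(a,[w]_a)\mapsto a$, and labeling $\ell(p)=\{(a,[w]_a)\mid a\in\rho(p,w)\}$. An isomorphism of simplicial models $\mathcal{C}\to\mathcal{D}$ is a bijection $g:\mathcal{V}^{\mathcal C}\to\mathcal{V}^{\mathcal D}$ with $X\in C^{\mathcal C}\iff g[X]\in C^{\mathcal D}$, $\chi^{\mathcal D}\circ g=\chi^{\mathcal C}$, and $g[\ell^{\mathcal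 C}(p)]=\ell^{\mathcal D}(p)$ for all $p$. An isomorphism of Kripke models is a bijection $f$ of worlds preserving $\delta$ and $\rho$ (i.e. $\delta'(f(w))=\delta(w)$, $\rho'(p,f(w))=\rho(p,w)$) with $wR_av\iff f(w)R'_af(v)$. *)

(* Defs.v *)
From mathcomp Require Import all_boot.
From mathcomp Require Import boolp classical_sets.
Set Implicit Arguments. Unset Strict Implicit. Unset Printing Implicit Defensive.
Local Open Scope classical_set_scope.

Section Models.
Variables (A : finType) (P : countType).

Local Unset Implicit Arguments.
Record smodel := SModel {
  sV : Type;
  sC : set (set sV);
  schi : sV -> A;
  sl : P -> set sV }.

Local Set Implicit Arguments.
Definition is_smodel (C : smodel) : Prop :=
  [/\ (exists v : sV C, True),
      ~ sC C set0,
      (forall X Y, sC C X -> Y `<=` X -> Y !=set0 -> sC C Y),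
      (forall v, sC C [set v]) &
      (forall X, sC C X -> forall u v, X u -> X v -> schi C u = schi C v -> u = v)].

Definition facet (C : smodel) (F : set (sV C)) : Prop :=
  sC C F /\ forall G, sC C G -> F `<=` G -> G = F.

Local Unset Implicit Arguments.
Record kmodel := KModel {
  kW : Type;
  kdelta : kW -> set A;
  kR : A -> kW -> set kW;
  krho : P -> kW -> set A }.

Local Set Implicit Arguments.
Definition is_kmodel (M : kmodel) : Prop :=
  [/\ (exists w : kW M, True),
      (forall w, kdelta M w !=set0),
      (forall a w, ~ kdelta M w a -> kR M a w = set0) &
      (forall p w, krho M p w `<=` kdelta M w)].

Definition dclass (M : kmodel) (w : kW M) : set (kW M) :=
  [set v | forall a, kdelta M w a -> kR M a w v].

Definition is_local_epistemic (M : kmodel) : Prop :=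
  [/\ is_kmodel M,
      (forall a, [/\ (forall w, kdelta M w a -> kR M a w w),
                     (forall w v, kdelta M w a -> kdelta M v a -> kR M a w v -> kR M a v w) &
                     (forall w v u, kdelta M w a -> kdelta M v a -> kdelta M u a ->
                        kR M a w v -> kR M a v u -> kR M a w u)]),
      (forall a w v, kR M a w v -> kdelta M w a -> kdelta M v a),
      (forall a p w v, kR M a w v -> krho M p w a -> krho M p v a) &
      (forall w v, dclass w v -> kdelta M v `<=` kdelta M w)].

Definition is_proper (M : kmodel) : Prop :=
  is_local_epistemic M /\ forall w : kW M, dclass w = [set w].

Definition pr_world (M : kmodel) := {X : set (kW M) | exists w, X = dclass w}.

Definition pr_rep (M : kmodel) (X : pr_world M) : kW M := projT1 (cid (svalP X)).

Definition properization (M : kmodel) : kmodel :=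
  @KModel (pr_world M)
    (fun X => kdelta M (pr_rep X))
    (fun a X Y => exists w v, sval X = dclass w /\ sval Y = dclass v /\ kR M a w v)
    (fun p X => krho M p (pr_rep X)).

Definition LEM (C : smodel) : kmodel :=
  @KModel {F : set (sV C) | facet F}
    (fun F => schi C @` sval F)
    (fun a F G => (schi C @` (sval F `&` sval G)) a)
    (fun p F => schi C @` (sval F `&` sl C p)).

Definition SC_vertex (M : kmodel) :=
  {x : A * set (kW M) | exists w, kdelta M w x.1 /\ x.2 = kR M x.1 w}.

Definition SC_facet (M : kmodel) (w : kW M) : set (SC_vertex M) :=
  [set x | kdelta M w (sval x).1 /\ (sval x).2 = kR M (sval x).1 w].

Definition SC (M : kmodel) : smodel :=
  @SModel (SC_vertex M)
    [set X | X !=set0 /\ exists w, X `<=` SC_facet w]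
    (fun x => (sval x).1)
    (fun p => [set x | exists w, krho M p w (sval x).1 /\ (sval x).2 = kR M (sval x).1 w]).

Definition siso (C D : smodel) : Prop :=
  exists g : sV C -> sV D,
    [/\ bijective g,
        (forall X, sC C X <-> sC D (g @` X)),
        (forall v, schi D (g v) = schi C v) &
        (forall p, g @` sl C p = sl D p)].

Definition kiso (M N : kmodel) : Prop :=
  exists f : kW M -> kW N,
    [/\ bijective f,
        (forall w, kdelta N (f w) = kdelta M w),
        (forall p w, krho N p (f w) = krho M p w) &
        (forall a w v, kR M a w v <-> kR N a (f w) (f v))].

End Models.

(* Main.v *)
Require Import Defs.
From mathcomp Require Import all_boot.
From mathcomp Require Import boolp classical_sets.
Set Implicit Arguments. Unset Strict Implicit. Unset Printing Implicit Defensive.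
Local Open Scope classical_set_scope.
Arguments kR {A P}. Arguments kdelta {A P}. Arguments krho {A P}. Arguments kW {A P}.
Arguments sC {A P}. Arguments sV {A P}. Arguments schi {A P}. Arguments sl {A P}.

Lemma R_char (A : finType) (P : countType) (M : kmodel A P) (HM : is_local_epistemic M)
  a w v : kR M a w v <-> [/\ kdelta M w a, kdelta M v a & kR M a w = kR M a v].
Proof.
case: HM => [[_ _ HRe _] Heq Hcl _ _].
have [Hrf Hsy Htr] := Heq a.
have dw : kR M a w v -> kdelta M w a.
  move=> H; apply: contrapT => /HRe E; by rewrite E in H.
split.
- move=> H; have da := dw H; have db := Hcl _ _ _ H da.
  split=> //; rewrite predeqE => u; split => Hu.
  + have du := Hcl _ _ _ Hu da. apply: (Htr v w u) => //. exact: Hsy.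
  + have du := Hcl _ _ _ Hu db. exact: (Htr w v u).
- case=> da db E; rewrite E; exact: Hrf.
Qed.

Definition same (A : finType) (P : countType) (M : kmodel A P) (w v : kW M) :=
  kdelta M w = kdelta M v /\ forall a, kdelta M w a -> kR M a w = kR M a v.

Definition mkv (A : finType) (P : countType) (M : kmodel A P) (w : kW M) a
  (H : kdelta M w a) : SC_vertex M :=
  exist _ (a, kR M a w) (ex_intro _ w (conj H erefl)).

Lemma vert_eq (A : finType) (P : countType) (M : kmodel A P) (x y : SC_vertex M) :
  sval x = sval y -> x = y.
Proof. case: x => x px; case: y => y py /= E; subst; congr exist; exact: Prop_irrelevance. Qed.

Lemma SCf_eq (A : finType) (P : countType) (M : kmodel A P) (HM : is_local_epistemic M) (w v : kW M) :
  SC_facet w = SC_facet v <-> same w v.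
Proof.
split.
- move=> E.
  have H1 : forall w v : kW M, SC_facet w `<=` SC_facet v ->
     forall a, kdelta M w a -> kdelta M v a /\ kR M a w = kR M a v.
    move=> w' v' S a da; have := S (mkv da) (conj da erefl); case=> /= ? E'; by split.
  split.
  + rewrite predeqE => a; split => da.
    * by case: (H1 w v (ltac:(rewrite E)) a da).
    * by case: (H1 v w (ltac:(rewrite E)) a da).
  + move=> a da; by case: (H1 w v (ltac:(rewrite E)) a da).
- case=> Ed ER; rewrite predeqE => x; rewrite /SC_facet /=; split.
  + case=> dx ->; rewrite -Ed; split => //; exact: ER.
  + case=> dx ->; rewrite Ed; split => //; symmetry; apply: ER; by rewrite Ed.
Qed.

Lemma dclass_eq (A : finType) (P : countType) (M : kmodel A P) (HM : is_local_epistemic M) (w v : kW M) :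
  dclass w = dclass v <-> same w v.
Proof.
have HM' := HM; case: HM' => [[_ _ HRe _] Heq Hcl _ Hdc].
have wi : forall u : kW M, dclass u u by move=> u a du; case: (Heq a) => Hr _ _; exact: Hr.
split.
- move=> E.
  have ww := wi w; rewrite E in ww. have vv := wi v; rewrite -E in vv.
  have Ed : kdelta M w = kdelta M v.
    by rewrite eqEsubset; split; apply: Hdc.
  split => // a da.
  have : kR M a v w by apply: ww; rewrite -Ed.
  by case/(R_char HM).
- case=> Ed ER; rewrite predeqE => u; rewrite /dclass /=; split.
  + move=> H a da; rewrite -ER; [apply: H|]; by rewrite Ed.
  + move=> H a da; rewrite ER //; apply: H; by rewrite -Ed.
Qed.

Lemma SCf_facet (A : finType) (P : countType) (M : kmodel A P) (HM : is_local_epistemic M)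
  (w : kW M) : @facet _ _ (SC M) (SC_facet w).
Proof.
have HM' := HM; case: HM' => [[_ Hdne HRe _] Heq Hcl _ Hdc].
split.
- split; last by exists w.
  case: (Hdne w) => a da; by exists (mkv da).
- move=> G [_ [v Sv]] SG.
  have H1 : forall a, kdelta M w a -> kdelta M v a /\ kR M a w = kR M a v.
    move=> a da; have := Sv _ (SG (mkv da) (conj da erefl)); case=> /= ? E'; by split.
  have vd : dclass w v.
    move=> a da; case: (H1 a da) => dv ->; by case: (Heq a) => Hr _ _; apply: Hr.
  have Hd := Hdc _ _ vd.
  rewrite eqEsubset; split => // x /Sv [dx E]; split; first exact: Hd.
  rewrite E; by case: (H1 _ (Hd _ dx)).
Qed.

Lemma SCf_all (A : finType) (P : countType) (M : kmodel A P) (HM : is_local_epistemic M)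
  (G : set (SC_vertex M)) : @facet _ _ (SC M) G -> exists w, G = SC_facet w.
Proof.
case=> [[_ [w Sw]] Hmax]; exists w; symmetry; apply: Hmax => //.
case: (SCf_facet HM w); done.
Qed.

Definition Fw (A : finType) (P : countType) (M : kmodel A P) (HM : is_local_epistemic M)
  (w : kW M) : kW (LEM (SC M)) := exist _ (SC_facet w) (SCf_facet HM w).

Lemma Fw_delta (A : finType) (P : countType) (M : kmodel A P) (HM : is_local_epistemic M)
  (w : kW M) : kdelta (LEM (SC M)) (Fw HM w) = kdelta M w.
Proof.
rewrite predeqE => a /=; split.
- by case=> x [dx _] <-.
- move=> da; by exists (mkv da).
Qed.

Lemma Fw_rho (A : finType) (P : countType) (M : kmodel A P) (HM : is_local_epistemic M)
  p (w : kW M) : krho (LEM (SC M)) p (Fw HM w) = krho M p w.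
Proof.
have HM' := HM; case: HM' => [[_ Hdne HRe Hrs] Heq Hcl Hrc Hdc].
rewrite predeqE => a /=; split.
- case=> x [[dx Ex] [u [ru Eu]]] <-.
  have : kR M (sval x).1 u w.
    rewrite -Eu Ex; by case: (Heq (sval x).1) => Hr _ _; apply: Hr.
  move=> H; exact: Hrc H ru.
- move=> ra; have da := Hrs _ _ _ ra; exists (mkv da) => //; split => //.
  by exists w.
Qed.

Lemma Fw_R (A : finType) (P : countType) (M : kmodel A P) (HM : is_local_epistemic M)
  a (w v : kW M) : kR (LEM (SC M)) a (Fw HM w) (Fw HM v) <-> kR M a w v.
Proof.
rewrite (R_char HM) /=; split.
- by case=> x [[dx Ex] [dv Ev]] <-; split => //; rewrite -Ex -Ev.
- case=> dw dv E; exists (mkv dw) => //; split => //; by split.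
Qed.

Lemma inj_surj_bij (T U : Type) (f : T -> U) :
  injective f -> (forall y, exists x, f x = y) -> bijective f.
Proof.
move=> inj sur; exists (fun y => projT1 (cid (sur y))).
- move=> x; apply: inj; exact: (projT2 (cid (sur (f x)))).
- move=> y; exact: (projT2 (cid (sur y))).
Qed.

Lemma Fw_eq (A : finType) (P : countType) (M : kmodel A P) (HM : is_local_epistemic M)
  (w v : kW M) : Fw HM w = Fw HM v <-> dclass w = dclass v.
Proof.
rewrite (dclass_eq HM) -(SCf_eq HM); split; first by move=> /(congr1 sval).
move=> E; apply: eq_exist; exact: E.
Qed.

Lemma part3 (A : finType) (P : countType) (M : kmodel A P) :
  is_proper M -> kiso M (LEM (SC M)).
Proof.
case=> HM Hp; exists (Fw HM); split.
- apply: inj_surj_bij.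
  + move=> w v /(Fw_eq HM); rewrite !Hp => E.
    have : [set w] w by []. by rewrite E.
  + case=> G fG; case: (SCf_all HM fG) => w Ew; exists w; apply: eq_exist; by rewrite Ew.
- exact: Fw_delta.
- exact: Fw_rho.
- move=> a w v; symmetry; exact: Fw_R.
Qed.

Lemma rep_spec (A : finType) (P : countType) (M : kmodel A P) (X : pr_world M) :
  sval X = dclass (pr_rep X).
Proof. exact: (projT2 (cid (svalP X))). Qed.

Lemma pr_eq (A : finType) (P : countType) (M : kmodel A P) (X Y : pr_world M) :
  sval X = sval Y -> X = Y.
Proof. case: X => x px; case: Y => y py /= E; subst; congr exist; exact: Prop_irrelevance. Qed.

Lemma part2 (A : finType) (P : countType) (M : kmodel A P) :
  is_local_epistemic M -> kiso (properization M) (LEM (SC M)).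
Proof.
move=> HM; exists (fun X => Fw HM (pr_rep X)); split.
- apply: inj_surj_bij.
  + move=> X Y /(Fw_eq HM) E; apply: pr_eq; by rewrite !rep_spec E.
  + case=> G fG; case: (SCf_all HM fG) => w Ew.
    pose X : pr_world M := exist _ (dclass w) (ex_intro _ w erefl).
    exists X.
    have : Fw HM (pr_rep X) = Fw HM w by apply/(Fw_eq HM); rewrite -rep_spec.
    move=> ->; apply: eq_exist; by rewrite Ew.
- move=> X; exact: Fw_delta.
- move=> p X; exact: Fw_rho.
- move=> a X Y; rewrite Fw_R /=; split.
  + case=> w [v [Ew [Ev R]]].
    have s1 : same (pr_rep X) w by apply/(dclass_eq HM); rewrite -rep_spec.
    have s2 : same (pr_rep Y) v by apply/(dclass_eq HM); rewrite -rep_spec.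
    move/(R_char HM): R => [dw dv E]; apply/(R_char HM).
    case: s1 s2 => [d1 R1] [d2 R2].
    have dw' : kdelta M (pr_rep X) a by rewrite d1.
    have dv' : kdelta M (pr_rep Y) a by rewrite d2.
    by split => //; rewrite R1 // R2.
  + move=> R; exists (pr_rep X), (pr_rep Y); by rewrite !rep_spec.
Qed.

Definition colset (A : finType) (P : countType) (C : smodel A P) (Y : set (sV C)) : {set A} :=
  [set a | `[< (schi C @` Y) a >]].

Lemma facet_ext (A : finType) (P : countType) (C : smodel A P) (HC : is_smodel C)
  (X : set (sV C)) : sC C X -> exists F, facet F /\ X `<=` F.
Proof.
case: HC => _ _ Hsub _ Hinj => HX.
pose Pn n := `[< exists Y, sC C Y /\ X `<=` Y /\ #|colset Y| = n >].
have exP : exists n, Pn n by exists #|colset X|; apply/asboolP; exists X; split => //; split => //.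
have ubP : forall n, Pn n -> n <= #|A|.
  move=> n /asboolP [Y [_ [_ <-]]]; exact: max_card.
case: (ex_maxnP exP ubP) => m /asboolP [Y [HY [XY cY]]] Hm.
exists Y; split => //; split => // G HG YG.
have sub : colset Y \subset colset G.
  apply/fintype.subsetP => a; rewrite !inE => -[y Yy <-]; exists y => //; exact: YG.
have ceq : colset Y = colset G.
  apply/eqP; rewrite eqEcard sub /= cY; apply: Hm; apply/asboolP; exists G; split => //.
  split => //; exact: subset_trans XY YG.
rewrite eqEsubset; split => // g Gg.
have : schi C g \in colset G by rewrite inE; apply/asboolP; exact: imageP.
rewrite -ceq inE => /asboolP [y Yy Ey].
have -> : g = y by apply: (Hinj G HG) => //; exact: YG.
done.
Qed.

Lemma facet_of (A : finType) (P : countType) (C : smodel A P) (HC : is_smodel C)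
  (v : sV C) : exists W : kW (LEM C), sval W v.
Proof.
have HC' := HC; case: HC' => _ _ _ H1 _.
case: (facet_ext HC (H1 v)) => F [fF sF]; exists (exist _ F fF); exact: sF.
Qed.

Lemma key (A : finType) (P : countType) (C : smodel A P) (HC : is_smodel C)
  (W : kW (LEM C)) v : sval W v -> kR (LEM C) (schi C v) W = [set G | sval G v].
Proof.
case: HC => _ _ _ _ Hinj Wv; rewrite predeqE => G /=; split.
- case=> u [Wu Gu] E; have [[fW _] _] := (svalP W, 0).
  by rewrite -(Hinj _ fW u v Wu Wv E).
- move=> Gv; by exists v.
Qed.

Definition Fv (A : finType) (P : countType) (C : smodel A P) (HC : is_smodel C) (v : sV C)
  : kW (LEM C) := projT1 (cid (facet_of HC v)).

Lemma Fv_in (A : finType) (P : countType) (C : smodel A P) (HC : is_smodel C) (v : sV C) :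
  sval (Fv HC v) v.
Proof. exact: (projT2 (cid (facet_of HC v))). Qed.

Definition gv (A : finType) (P : countType) (C : smodel A P) (HC : is_smodel C) (v : sV C)
  : SC_vertex (LEM C) :=
  @mkv _ _ (LEM C) (Fv HC v) (schi C v) (ex_intro2 _ _ v (Fv_in HC v) erefl).

Lemma gv_char (A : finType) (P : countType) (C : smodel A P) (HC : is_smodel C)
  (x : SC_vertex (LEM C)) u (W : kW (LEM C)) : sval W u ->
  sval x = (schi C u, kR (LEM C) (schi C u) W) -> x = gv HC u.
Proof.
move=> Wu E; apply: vert_eq; rewrite E.
change (sval (gv HC u)) with (schi C u, kR (LEM C) (schi C u) (Fv HC u)); congr pair.
by rewrite (key HC Wu) (key HC (Fv_in HC u)).
Qed.

Lemma face_W (A : finType) (P : countType) (C : smodel A P) (W : kW (LEM C)) : sC C (sval W).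
Proof. by case: (svalP W). Qed.

Lemma part1 (A : finType) (P : countType) (C : smodel A P) :
  is_smodel C -> siso C (SC (LEM C)).
Proof.
move=> HC; have HC' := HC; case: HC' => _ Hne Hsub _ Hinj.
have surjg : forall (y : SC_vertex (LEM C)) (W : kW (LEM C)),
    kdelta (LEM C) W (sval y).1 -> (sval y).2 = kR (LEM C) (sval y).1 W ->
    exists2 u, sval W u & y = gv HC u.
  move=> y W [u Wu Eu] E2; exists u => //; apply: (gv_char HC Wu).
  by rewrite Eu -E2; case: (sval y).
exists (gv HC); split.
- apply: inj_surj_bij.
  + move=> u v E.
    have Ec : schi C u = schi C v := congr1 (fun x => x.1) (congr1 sval E).
    have ER : kR (LEM C) (schi C u) (Fv HC u) = kR (LEM C) (schi C v) (Fv HC v)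
      := congr1 (fun x => x.2) (congr1 sval E).
    rewrite (key HC (Fv_in HC u)) (key HC (Fv_in HC v)) in ER.
    have : [set G : kW (LEM C) | sval G v] (Fv HC u) by rewrite -ER; exact: Fv_in.
    move=> /= Fuv; exact: (Hinj _ (face_W (Fv HC u)) u v (Fv_in HC u) Fuv Ec).
  + move=> y; case: (svalP y) => W [dW EW].
    by case: (surjg y W dW EW) => u _ ->; exists u.
- move=> X; split.
  + move=> HX; have X0 : X !=set0.
      apply/set0P; apply/negP => /eqP E; apply: Hne; by rewrite -E.
    case: (facet_ext HC HX) => F [fF XF].
    pose W : kW (LEM C) := exist _ F fF.
    split; first by case: X0 => x Xx; exists (gv HC x); exists x.
    exists W => _ [x Xx <-]; split; first by exists x => //; exact: XF.
    change (kR (LEM C) (schi C x) (Fv HC x) = kR (LEM C) (schi C x) W).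
    rewrite (key HC (Fv_in HC x)) (@key _ _ _ HC W x) //; exact: XF.
  + case=> X0 [W SW].
    apply: (Hsub (sval W)); [exact: face_W| |by case: X0 => _ [x Xx _]; exists x].
    move=> x Xx; case: (SW _ (ex_intro2 _ _ x Xx erefl)) => [[u Wu Eu] ER].
    change (kR (LEM C) (schi C x) (Fv HC x) = kR (LEM C) (schi C x) W) in ER.
    change (schi C u = schi C x) in Eu.
    rewrite (key HC (Fv_in HC x)) -Eu (key HC Wu) in ER.
    have : [set G : kW (LEM C) | sval G u] (Fv HC x) by rewrite -ER; exact: Fv_in.
    move=> /= Fu; by rewrite (Hinj _ (face_W (Fv HC x)) x u (Fv_in HC x) Fu (esym Eu)).
- by [].
- move=> p; rewrite predeqE => y; split.
  + case=> v lv <-; exists (Fv HC v); split; last by [].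
    exists v; last by []. split; [exact: Fv_in | exact: lv].
  + case=> W [[u [Wu lu] Eu] E2]; exists u => //; symmetry.
    apply: (gv_char HC Wu); rewrite Eu -E2; by case: (sval y).
Qed.

Theorem proposition3 (A : finType) (hA : 0 < #|A|) (P : countType) :
  (forall C : smodel A P, is_smodel C -> siso C (SC (LEM C))) /\
  (forall M : kmodel A P, is_local_epistemic M ->
      kiso (properization M) (LEM (SC M))) /\
  (forall M : kmodel A P, is_proper M -> kiso M (LEM (SC M))).
Proof.
split; first exact: part1.
split; [exact: part2 | exact: part3].
Qed.
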